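(* Let $G=(A\cup B,E)$ be a bipartite graph, let $\sigma_A=(a_1,\ldots,a_n)$ be an ordering of $A$ and $\sigma_B=(b_1,\ldots,b_m)$ an ordering of $B$. Let $H$ be the directed graph with vertex set $A\cup B$ and the following arcs: $a_{i-1}\to a_i$ for $2\le i\le n$; $b_{p-1}\to b_p$ for $2\le p\le m$; $a_i\to b_p$ whenever $a_ib_p\in E$; and $b_p\to a_j$ whenever there exist indices $i<j$ and $p<q$ with $a_ib_p\in E$, $a_jb_q\in E$ and $a_jb_p\notin E$. Then $G$ admits a Stick representation respecting $\sigma_A$ and $\sigma_B$ if and only if $H$ is acyclic.
   Context: A Stick representation of a bipartite graph $G=(A\cup B,E)$ (with $A$ horizontal and $B$ vertical) assigns to each vertex of $A$ a horizontal segment and to each vertex of $B$ a vertical segment such that the left endpoints of all horizontal segments and the bottom endpoints of all vertical segments lie on a fixed ground line $\ell$ of slope $-1$ (with the segments lying on the side of $\ell$ into which they extend rightward/upward), and a horizontal and a vertical segment intersect if and only if the corresponding vertices are adjacent in $G$. The representation respects $\sigma_A$ and $\sigma_B$ if, ordering the points where segments touch $\ell$ from left to right, the $i$th horizontal segment corresponds to the $i$th vertex of $\sigma_A$ and the $j$th vertical segment corresponds to the $j$th vertex of $\sigma_B$. *)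

(* Defs.v *)
From mathcomp Require Import all_boot all_order all_algebra.
From mathcomp Require Import reals.
Set Implicit Arguments. Unset Strict Implicit. Unset Printing Implicit Defensive.
Import Order.TTheory GRing.Theory Num.Theory.
Local Open Scope ring_scope.

(* Bipartite graph G = (A u B, E) with A = 'I_n, B = 'I_m; the ordering
   sigma_A is a_1,...,a_n = 0,...,n-1 and sigma_B is b_1,...,b_m = 0,...,m-1.
   The edge set is given by E : 'I_n -> 'I_m -> bool. *)

Definition on_hseg (R : realType) (x y l : R) (p : R * R) : Prop :=
  p.2 = y /\ x <= p.1 /\ p.1 <= x + l.

Definition on_vseg (R : realType) (x y h : R) (p : R * R) : Prop :=
  p.1 = x /\ y <= p.2 /\ p.2 <= y + h.

(* The ground line
   is l = {(x,y) | x + y = c} (slope -1).  Vertex a_i gets the horizontal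
   segment from (xA i, yA i) to (xA i + lA i, yA i) and b_p the vertical
   segment from (xB p, yB p) to (xB p, yB p + hB p); the left/bottom endpoints
   lie on l; ordering the touching points of l from left to right (by their
   x-coordinate) gives sigma_A on the horizontal and sigma_B on the vertical
   segments. *)
Definition stick_rep_respecting (R : realType) (n m : nat)
    (E : 'I_n -> 'I_m -> bool) : Prop :=
  exists (c : R) (xA yA lA : 'I_n -> R) (xB yB hB : 'I_m -> R),
    [/\ (forall i, xA i + yA i = c /\ 0 < lA i),
        (forall p, xB p + yB p = c /\ 0 < hB p),
        (forall i j : 'I_n, (i < j)%N -> xA i < xA j),
        (forall p q : 'I_m, (p < q)%N -> xB p < xB q) &
        (forall i p, E i p <->
           exists pt : R * R, on_hseg (xA i) (yA i) (lA i) pt /\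
                              on_vseg (xB p) (yB p) (hB p) pt)].

Definition H_arc (n m : nat) (E : 'I_n -> 'I_m -> bool) :
    rel ('I_n + 'I_m) :=
  fun u v =>
    match u, v with
    | inl i, inl j => (i.+1 == j)%N
    | inr p, inr q => (p.+1 == q)%N
    | inl i, inr p => E i p
    | inr p, inl j =>
        [exists i : 'I_n, exists q : 'I_m,
           [&& (i < j)%N, (p < q)%N, E i p, E j q & ~~ E j p]]
    end.

Definition acyclic (V : finType) (arc : rel V) : Prop :=
  forall (v : V) (s : seq V), s != [::] -> path arc v s -> last v s != v.

(* Main.v *)
Require Import Defs.
From mathcomp Require Import all_boot all_order all_algebra.
From mathcomp Require Import reals.
From mathcomp Require Import lra zify.
Set Implicit Arguments. Unset Strict Implicit. Unset Printing Implicit Defensive.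
Import Order.TTheory GRing.Theory Num.Theory.

Definition anc (V : finType) (e : rel V) (v : V) :=
  [set u | [exists w, e u w && connect e w v]].

Lemma anc_lt (V : finType) (e : rel V) : acyclic e ->
  forall u v, e u v -> (#|anc e u| < #|anc e v|)%N.
Proof.
move=> ac u v euv; apply: proper_card; apply/properP; split.
  apply/subsetP => x; rewrite !inE => /existsP [w /andP [exw cwu]].
  apply/existsP; exists w; rewrite exw /=.
  exact: connect_trans cwu (connect1 euv).
exists u; rewrite !inE.
  by apply/existsP; exists v; rewrite euv connect0.
apply/existsP => -[w /andP [euw /connectP [s pth lst]]].
have := ac u (w :: s) isT; rewrite /= euw pth /= -lst eqxx.
by move=> /(_ isT).
Qed.

Lemma ord_mono n (f : 'I_n -> nat) :
  (forall i j : 'I_n, i.+1 = j :> nat -> (f i < f j)%N) ->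
  forall i j : 'I_n, (i < j)%N -> (f i < f j)%N.
Proof.
move=> h i j ij.
suff : forall k (j : 'I_n), j = (i + k.+1)%N :> nat -> (f i < f j)%N.
  move=> H; apply: (H (j - i.+1)%N); lia.
elim=> [|k IH] j' ej.
  apply: h; lia.
have jlt : (i + k.+1 < n)%N by have := ltn_ord j'; lia.
apply: ltn_trans (IH (Ordinal jlt) erefl) (h _ _ _) => /=; lia.
Qed.

Lemma bigmax_attained (I : finType) (P : pred I) (F : I -> nat) :
  (0 < \max_(i | P i) F i)%N -> exists2 i, P i & F i = \max_(i | P i) F i.
Proof.
case: (pickP P) => [i0 Pi0 | none].
  move=> _; case: (eq_bigmax_cond F (A := P)) => [|i Pi ->].
    by apply/card_gt0P; exists i0.
  by exists i.
by rewrite big_pred0.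
Qed.
Definition isl (n m : nat) (u : 'I_n + 'I_m) := if u is inl _ then true else false.
Lemma rep_acyclic (R : realType) (n m : nat) (E : 'I_n -> 'I_m -> bool) :
  stick_rep_respecting R E -> acyclic (H_arc E).
Proof.
case=> c [xA [yA [lA [xB [yB [hB [HA HB HxA HxB HE]]]]]]].
pose pot (u : 'I_n + 'I_m) : R := match u with inl i => xA i | inr p => xB p end.
pose lt_key u v := (pot u < pot v)%R \/ (pot u = pot v /\ isl u /\ ~~ isl v).
have arc_key : forall u v, H_arc E u v -> lt_key u v.
  case=> [i|p] [j|q] /=.
  - move/eqP=> eij; left; apply: HxA; rewrite -eij; exact: ltnSn.
  - move=> /HE [[x y] [[/= hy [h1 h2]] [/= hx [h3 h4]]]].
    have : (xA i <= xB q)%R by rewrite -hx.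
    rewrite le_eqVlt => /orP [/eqP e|lt]; [right | left] => //.
  - case/existsP=> i /existsP [q /and5P [lij lpq Eip Ejq nEjp]].
    left; rewrite /= ltNge; apply/negP => hle.
    have hij := HxA _ _ lij; have hpq := HxB _ _ lpq.
    move: (HE i p) => [/(_ Eip) [[x1 y1] [[/= hy1 [h11 h12]] [/= hx1 [h13 h14]]]] _].
    move: (HE j q) => [/(_ Ejq) [[x2 y2] [[/= hy2 [h21 h22]] [/= hx2 [h23 h24]]]] _].
    move/negP: nEjp; apply; apply/HE.
    exists (xB p, yA j); split; rewrite /on_hseg /on_vseg /=.
      move: (HA i) (HA j) (HB p) (HB q) => [? ?] [? ?] [? ?] [? ?].
      split => //; split; lra.
    move: (HA i) (HA j) (HB p) (HB q) => [? ?] [? ?] [? ?] [? ?].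
    split => //; split; lra.
  - move/eqP=> e; left; apply HxB; rewrite -e; exact: ltnSn.
have key_trans : forall u v w, lt_key u v -> lt_key v w -> lt_key u w.
  move=> u v w [h1|[e1 [i1 j1]]] [h2|[e2 [i2 j2]]].
  - left; exact: lt_trans h1 h2.
  - left; by rewrite -e2.
  - left; by rewrite e1.
  - by rewrite i2 in j1.
have key_irr : forall u, ~ lt_key u u.
  move=> u [h|[_ [h1 h2]]]; first by rewrite ltxx in h.
  by rewrite h1 in h2.
have key_path : forall s v, path (H_arc E) v s -> s != [::] -> lt_key v (last v s).
  elim=> [//|w s IH] v /= /andP [a pth] _.
  case: s IH pth => [|x s'] IH pth; first exact: arc_key.
  exact: key_trans (arc_key _ _ a) (IH w pth isT).
move=> v s ns pth; apply/eqP => el.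
by apply: (key_irr v); rewrite -{2}el; apply: key_path.
Qed.
Local Open Scope ring_scope.
Lemma acyclic_rep (R : realType) (n m : nat) (E : 'I_n -> 'I_m -> bool) :
  acyclic (H_arc E) -> stick_rep_respecting R E.
Proof.
move=> ac.
pose e := H_arc E.
pose pos (u : 'I_n + 'I_m) : nat :=
  match u with inl _ => (2 * #|anc e u|)%N | inr _ => (2 * #|anc e u|).+1 end.
have posarc : forall u v, e u v -> (pos u < pos v)%N.
  move=> u v /(anc_lt ac) h; case: u h => [i|p]; case: v => [j|q] /= h; rewrite /pos /e; lia.
pose posA i := pos (inl i). pose posB p := pos (inr p).
have monoA : forall i j : 'I_n, (i < j)%N -> (posA i < posA j)%N.
  apply: ord_mono => i j eij; apply: posarc; rewrite /e /= eij.
  exact/eqP.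
have monoB : forall p q : 'I_m, (p < q)%N -> (posB p < posB q)%N.
  apply: ord_mono => i j eij; apply: posarc; rewrite /e /= eij.
  exact/eqP.
have neqAB : forall i p, posA i <> posB p.
  move=> i p; rewrite /posA /posB /=; lia.
pose LA i := (\max_(p | E i p) (posB p - posA i))%N.
pose HB p := (\max_(i | E i p) (posB p - posA i))%N.
have key : forall i p, E i p =
   [&& (posA i < posB p)%N, (posB p - posA i <= LA i)%N & (posB p - posA i <= HB p)%N].
  move=> i p; apply/idP/idP.
    move=> Eip; apply/and3P; split.
    - by apply: posarc.
    - exact: (@leq_bigmax_cond _ (E i) (fun q => posB q - posA i)%N p Eip).
    - exact: (@leq_bigmax_cond _ (E^~ p) (fun j => posB p - posA j)%N i Eip).
  case/and3P=> lt hL hH; apply/idPn => nE.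
  have [q Eiq eq] : exists2 q, E i q & (posB q - posA i)%N = LA i.
    by apply: bigmax_attained; rewrite -/(LA i); lia.
  have [j Ejp ej] : exists2 j, E j p & (posB p - posA j)%N = HB p.
    by apply: bigmax_attained; rewrite -/(HB p); lia.
  have ltq : (posA i < posB q)%N by apply: posarc.
  have ltj : (posA j < posB p)%N by apply: posarc.
  have pq : (p < q)%N.
    case: (ltngtP p q) => // [qp|/val_inj epq].
      have := monoB _ _ qp; lia.
    by move: nE; rewrite epq Eiq.
  have ji : (j < i)%N.
    case: (ltngtP j i) => // [ij|/val_inj eji].
      have := monoA _ _ ij; lia.
    by move: nE; rewrite -eji Ejp.
  have : e (inr p) (inl i).
    by apply/existsP; exists j; apply/existsP; exists q; rewrite ji pq Ejp Eiq nE.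
  move/posarc; rewrite -/(posA i) -/(posB p); lia.
exists 0.
exists (fun i => (2 * posA i)%N%:R), (fun i => - (2 * posA i)%N%:R), (fun i => ((2 * LA i).+1)%N%:R).
exists (fun p => (2 * posB p)%N%:R), (fun p => - (2 * posB p)%N%:R), (fun p => ((2 * HB p).+1)%N%:R).
split.
- move=> i; split; [by rewrite addrN | by rewrite ltr0n].
- move=> p; split; [by rewrite addrN | by rewrite ltr0n].
- by move=> i j /monoA h; rewrite ltr_nat; lia.
- by move=> p q /monoB h; rewrite ltr_nat; lia.
move=> i p; rewrite key; split.
  case/and3P => lt hL hH.
  exists ((2 * posB p)%N%:R, - (2 * posA i)%N%:R); rewrite /on_hseg /on_vseg /=.
  have h1 : ((2 * posA i)%N%:R <= (2 * posB p)%N%:R :> R) by rewrite ler_nat; lia.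
  have h2 : ((2 * posB p)%N%:R <= (2 * posA i + (2 * LA i).+1)%N%:R :> R) by rewrite ler_nat; lia.
  have h3 : ((2 * posB p)%N%:R <= (2 * posA i + (2 * HB p).+1)%N%:R :> R) by rewrite ler_nat; lia.
  rewrite natrD in h2; rewrite natrD in h3.
  split; split => //; split; lra.
case=> [[x y] [[/= hy [h1 h2]] [/= hx [h3 h4]]]].
subst x y.
have g1 : ((2 * posA i)%N%:R <= (2 * posB p)%N%:R :> R) by lra.
have g2 : ((2 * posB p)%N%:R <= (2 * posA i)%N%:R + ((2 * LA i).+1)%N%:R :> R) by lra.
have g3 : ((2 * posB p)%N%:R <= (2 * posA i)%N%:R + ((2 * HB p).+1)%N%:R :> R) by lra.
rewrite -natrD ler_nat in g2; rewrite -natrD ler_nat in g3; rewrite ler_nat in g1.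
have := neqAB i p => ne; apply/and3P.
move: g1 g2 g3 ne; move: (posA i) (posB p) (LA i) (HB p) => a b l h.
clear; move=> *; split; lia.
Qed.

Theorem lemma1 (R : realType) (n m : nat) (E : 'I_n -> 'I_m -> bool) :
  stick_rep_respecting R E <-> acyclic (H_arc E).
Proof.
split; [exact: rep_acyclic | exact: acyclic_rep].
Qed.
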